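(* Let $\varphi:(-1,1)\to\mathbb{R}^n$ be a $C^3$ curve with $\varphi'\neq0$. (i) If $S_1\varphi(x)\le \pi^2/2$ for all $x\in(-1,1)$, then for all $x_1,x_2\in(-1,1)$, $$\frac{|\varphi(x_1)-\varphi(x_2)|}{\{|\varphi'(x_1)||\varphi'(x_2)|\}^{1/2}}\ge \frac{2}{\pi}\sin\Big(\frac{\pi}{2}|x_1-x_2|\Big).$$ (ii) If $S_1\varphi(x)\le 2(1-x^2)^{-2}$ for all $x\in(-1,1)$, then for all $x_1,x_2\in(-1,1)$, $$\frac{|\varphi(x_1)-\varphi(x_2)|}{\{|\varphi'(x_1)||\varphi'(x_2)|\}^{1/2}}\ge \sqrt{(1-x_1^2)(1-x_2^2)}\;d(x_1,x_2),$$ where $d(x_1,x_2)=\big|\tfrac12\log\tfrac{1+x_1}{1-x_1}-\tfrac12\log\tfrac{1+x_2}{1-x_2}\big|$.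
   Context: For a $C^3$ curve $\varphi$ into $\mathbb{R}^n$ with $\varphi'\neq0$, the Ahlfors Schwarzian is $S_1\varphi=\frac{\langle\varphi',\varphi'''\rangle}{|\varphi'|^2}-3\frac{\langle\varphi',\varphi''\rangle^2}{|\varphi'|^4}+\frac32\frac{|\varphi''|^2}{|\varphi'|^2}$, with Euclidean inner product and norm. *)

(* Defs.v *)
From Stdlib Require Import Reals.
Open Scope R_scope.

(* Vectors of R^n are represented as functions nat -> R, only the
   coordinates 0..n-1 being relevant. *)
Fixpoint sumR (n : nat) (f : nat -> R) : R :=
  match n with
  | O => 0
  | S m => sumR m f + f m
  end.

Definition dotn (n : nat) (u v : nat -> R) : R := sumR n (fun i => u i * v i).
Definition normn (n : nat) (u : nat -> R) : R := sqrt (dotn n u u).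
Definition subv (u v : nat -> R) : nat -> R := fun i => u i - v i.

Definition C3_curve (n : nat) (phi d1 d2 d3 : R -> nat -> R) : Prop :=
  forall x, -1 < x < 1 -> forall i, (i < n)%nat ->
    derivable_pt_lim (fun t => phi t i) x (d1 x i) /\
    derivable_pt_lim (fun t => d1 t i) x (d2 x i) /\
    derivable_pt_lim (fun t => d2 t i) x (d3 x i) /\
    continuity_pt (fun t => d3 t i) x.

Definition S1 (n : nat) (d1 d2 d3 : R -> nat -> R) (x : R) : R :=
  dotn n (d1 x) (d3 x) / (normn n (d1 x))^2
  - 3 * (dotn n (d1 x) (d2 x))^2 / (normn n (d1 x))^4
  + 3/2 * (normn n (d2 x))^2 / (normn n (d1 x))^2.

Definition dhyp (x1 x2 : R) : R :=
  Rabs (1/2 * ln ((1 + x1) / (1 - x1)) - 1/2 * ln ((1 + x2) / (1 - x2))).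

(* Main.v *)
Require Import Defs.
From Stdlib Require Import Reals Lra Lia Psatz.
Open Scope R_scope.

Notation dpl := derivable_pt_lim.

Lemma dpl_eq f x a b : dpl f x a -> a = b -> dpl f x b.
Proof. intros H ->; exact H. Qed.
Lemma dpl_const c x : dpl (fun _ => c) x 0.
Proof. apply (derivable_pt_lim_const c x). Qed.
Lemma dpl_id x : dpl (fun t => t) x 1.
Proof. apply derivable_pt_lim_id. Qed.
Lemma dpl_plus f g x a b : dpl f x a -> dpl g x b -> dpl (fun t => f t + g t) x (a+b).
Proof. intros; apply (derivable_pt_lim_plus f g); auto. Qed.
Lemma dpl_minus f g x a b : dpl f x a -> dpl g x b -> dpl (fun t => f t - g t) x (a-b).
Proof. intros; apply (derivable_pt_lim_minus f g); auto. Qed.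
Lemma dpl_mult f g x a b : dpl f x a -> dpl g x b -> dpl (fun t => f t * g t) x (a * g x + f x * b).
Proof. intros; apply (derivable_pt_lim_mult f g); auto. Qed.
Lemma dpl_div f g x a b : dpl f x a -> dpl g x b -> g x <> 0 ->
  dpl (fun t => f t / g t) x ((a * g x - b * f x) / (g x * g x)).
Proof. intros; apply (derivable_pt_lim_div f g); auto. Qed.
Lemma dpl_comp f h x a b : dpl f x a -> dpl h (f x) b -> dpl (fun t => h (f t)) x (b * a).
Proof. intros; apply (derivable_pt_lim_comp f h); auto. Qed.
Lemma dpl_scal c f x a : dpl f x a -> dpl (fun t => c * f t) x (c * a).
Proof. intros H; eapply dpl_eq. apply (dpl_mult (fun _ => c) f). apply dpl_const. exact H. ring. Qed.

Lemma dpl_cont f x a : dpl f x a -> continuity_pt f x.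
Proof. intro H. apply derivable_continuous_pt. exists a; exact H. Qed.

Lemma cont_eps f x : continuity_pt f x -> forall eps, eps > 0 ->
  exists del, del > 0 /\ forall y, Rabs (y - x) < del -> Rabs (f y - f x) < eps.
Proof.
  intros H eps He. destruct (H eps He) as [d [Hd H']]. exists d; split; auto.
  intros y Hy. destruct (Req_dec y x) as [->|Hne].
  - replace (f x - f x) with 0 by ring. rewrite Rabs_R0; lra.
  - apply (H' y). split. split. exact I. auto. exact Hy.
Qed.

Lemma cont_plus f g x : continuity_pt f x -> continuity_pt g x -> continuity_pt (fun t => f t + g t) x.
Proof. intros; apply (continuity_pt_plus f g); auto. Qed.
Lemma cont_minus f g x : continuity_pt f x -> continuity_pt g x -> continuity_pt (fun t => f t - g t) x.
Proof. intros; apply (continuity_pt_minus f g); auto. Qed.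
Lemma cont_mult f g x : continuity_pt f x -> continuity_pt g x -> continuity_pt (fun t => f t * g t) x.
Proof. intros; apply (continuity_pt_mult f g); auto. Qed.
Lemma cont_comp f h x : continuity_pt f x -> continuity_pt h (f x) -> continuity_pt (fun t => h (f t)) x.
Proof. intros; apply (continuity_pt_comp f h); auto. Qed.
Lemma cont_const c x : continuity_pt (fun _ => c) x.
Proof. apply continuity_pt_const. intros a b; reflexivity. Qed.
Lemma cont_abs f x : continuity_pt f x -> continuity_pt (fun t => Rabs (f t)) x.
Proof. intros; apply cont_comp; auto. apply Rcontinuity_abs. Qed.

Lemma dotn_comb3 n c1 c2 c3 f g h :
  dotn n (fun i => c1*f i + c2*g i + c3*h i) (fun i => c1*f i + c2*g i + c3*h i) =
  c1^2*dotn n f f + c2^2*dotn n g g + c3^2*dotn n h h + 2*c1*c2*dotn n f g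
  + 2*c1*c3*dotn n f h + 2*c2*c3*dotn n g h.
Proof. unfold dotn. induction n; simpl. ring. rewrite IHn. ring. Qed.

Lemma dotn_nonneg n f : 0 <= dotn n f f.
Proof. unfold dotn. induction n; simpl. lra. nra. Qed.

Lemma dotn_sym n f g : dotn n f g = dotn n g f.
Proof. unfold dotn. induction n; simpl. ring. rewrite IHn. ring. Qed.

Lemma dotn_deriv n f g f' g' x :
  (forall i, (i < n)%nat -> dpl (fun t => f t i) x (f' i) /\ dpl (fun t => g t i) x (g' i)) ->
  dpl (fun t => dotn n (f t) (g t)) x (dotn n f' (g x) + dotn n (f x) g').
Proof.
  unfold dotn. induction n; intros H; simpl.
  - eapply dpl_eq. apply dpl_const. ring.
  - eapply dpl_eq. apply dpl_plus. apply IHn. intros i Hi; apply H; lia.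
    destruct (H n) as [H1 H2]; [lia|]. apply (dpl_mult (fun t => f t n) (fun t => g t n)). exact H1. exact H2. ring.
Qed.

Lemma subv_sym n p q : normn n (subv p q) = normn n (subv q p).
Proof. unfold normn, dotn, subv. f_equal. induction n; simpl. ring. rewrite IHn. ring. Qed.

Lemma CS n f g : (dotn n f g)^2 <= dotn n f f * dotn n g g.
Proof.
  destruct (Req_dec (dotn n g g) 0) as [E|E].
  -
    assert (Hg: forall c, 0 <= dotn n (fun i => c*f i + 1*g i + 0*g i) (fun i => c*f i + 1*g i + 0*g i)) by (intro; apply dotn_nonneg).
    assert (H0: forall c, 0 <= c^2 * dotn n f f + 2*c*dotn n f g).
    { intro c. specialize (Hg c). rewrite dotn_comb3 in Hg. rewrite E in Hg. nra. }
    rewrite E. destruct (Req_dec (dotn n f g) 0) as [E2|E2]. rewrite E2; lra.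
    exfalso. pose proof (dotn_nonneg n f) as Hf.
    specialize (H0 (- (dotn n f g) / (dotn n f f + 1))).
    assert (Hp: dotn n f f + 1 > 0) by lra.
    set (A := dotn n f f) in *. set (B := dotn n f g) in *.
    assert (0 <= (B^2/(A+1)) * (A/(A+1) - 2)).
    { replace ((B^2/(A+1)) * (A/(A+1) - 2)) with ((- B / (A + 1)) ^ 2 * A + 2 * (- B / (A + 1)) * B) by (field; lra). auto. }
    assert (A/(A+1) < 1). { apply (Rmult_lt_reg_r (A+1)); auto. field_simplify; lra. }
    assert (B^2/(A+1) > 0). { apply Rdiv_lt_0_compat; auto. nra. }
    nra.
  - pose proof (dotn_nonneg n g).
    pose proof (dotn_nonneg n (fun i => dotn n g g*f i + (- dotn n f g)*g i + 0*g i)) as HH.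
    rewrite dotn_comb3 in HH.
    set (A := dotn n f f) in *. set (B := dotn n f g) in *. set (C := dotn n g g) in *.
    assert (C > 0) by lra.
    assert (0 <= C * (A*C - B^2)) by nra. nra.
Qed.
Lemma key_alg ww w1 w2 e11 e12 e22 e13 : ww > 0 -> e11 > 0 ->
  let c1 := 2*e11^2 in let c2 := -2*e11*w1 - ww*e12 in let c3 := ww*e11 in
  0 <= c1^2*ww + c2^2*e11 + c3^2*e22 + 2*c1*c2*w1 + 2*c1*c3*w2 + 2*c2*c3*e12 ->
  0 <= ((e11+w2)*ww - 2*w1*w1)/(ww*ww) - ((e22+e13)*(2*e11) - 2*(2*e12)*e12)/((2*e11)*(2*e11))
     + (w1/ww - e12/(2*e11))^2 + /2 * (e13/e11 - 3*e12^2/e11^2 + 3/2*e22/e11).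
Proof.
  intros Hw He c1 c2 c3 HG.
  replace (((e11+w2)*ww - 2*w1*w1)/(ww*ww) - ((e22+e13)*(2*e11) - 2*(2*e12)*e12)/((2*e11)*(2*e11))
     + (w1/ww - e12/(2*e11))^2 + /2 * (e13/e11 - 3*e12^2/e11^2 + 3/2*e22/e11))
  with ((c1^2*ww + c2^2*e11 + c3^2*e22 + 2*c1*c2*w1 + 2*c1*c3*w2 + 2*c2*c3*e12) / (4*ww^2*e11^3)).
  apply Rmult_le_pos; auto. left; apply Rinv_0_lt_compat. apply Rmult_lt_0_compat. nra. apply pow_lt; auto.
  unfold c1, c2, c3. field. lra.
Qed.

Lemma mono_of_deriv f f' a b : (forall t, a < t < b -> dpl f t (f' t)) ->
  (forall t, a < t < b -> 0 <= f' t) -> forall t1 t2, a < t1 -> t1 <= t2 -> t2 < b -> f t1 <= f t2.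
Proof.
  intros Hd Hp t1 t2 H1 H2 H3. destruct (Req_dec t1 t2) as [->|Hne]. lra.
  destruct (MVT_cor2 f f' t1 t2) as [c [Hc1 Hc2]]. lra.
  intros c Hc. apply Hd. lra.
  assert (0 <= f' c) by (apply Hp; lra). nra.
Qed.

Lemma sturm (a b C : R) (y L L' u du ddu P : R -> R) :
  a < b ->
  (forall t, a < t < b -> dpl y t (y t * L t)) ->
  (forall t, a < t < b -> dpl L t (L' t)) ->
  (forall t, a < t < b -> 0 <= L' t + L t ^ 2 + P t / 2) ->
  (forall t, a < t < b -> 0 <= y t) ->
  (forall t, a < t < b -> dpl u t (du t)) ->
  (forall t, a < t < b -> dpl du t (ddu t)) ->
  (forall t, a < t < b -> ddu t = - (P t / 2) * u t) ->
  (forall t, a < t < b -> 0 < u t) ->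
  (forall eps, eps > 0 -> exists del, del > 0 /\ forall t, a < t < a + del -> y t * (u t * L t - du t) > - eps) ->
  (forall eps c, eps > 0 -> c > a -> exists t', a < t' < c /\ y t' >= (C - eps) * u t') ->
  forall t, a < t < b -> y t >= C * u t.
Proof.
  intros Hab Hy HL HQ Hy0 Hu Hdu Hddu Hu0 HW0 HR.
  set (W := fun t => y t * (u t * L t - du t)).
  assert (HWd: forall t, a < t < b -> dpl W t (y t * u t * (L' t + L t ^ 2 + P t / 2))).
  { intros t Ht. unfold W. eapply dpl_eq.
    apply dpl_mult. apply Hy; auto. apply dpl_minus. apply dpl_mult. apply Hu; auto. apply HL; auto. apply Hdu; auto.
    rewrite Hddu; auto. ring. }
  assert (HWm: forall t1 t2, a < t1 -> t1 <= t2 -> t2 < b -> W t1 <= W t2).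
  { apply (mono_of_deriv W (fun t => y t * u t * (L' t + L t ^ 2 + P t / 2)) a b). exact HWd. intros t Ht.
    apply Rmult_le_pos. apply Rmult_le_pos. apply Hy0; auto. left; apply Hu0; auto. apply HQ; auto. }
  assert (HWp: forall t, a < t < b -> 0 <= W t).
  { intros t Ht. destruct (Rle_lt_dec 0 (W t)) as [|Hn]; auto. exfalso.
    destruct (HW0 (- W t / 2)) as [del [Hdel Hd]]. lra.
    set (t' := Rmin (a + del/2) ((a+t)/2)).
    assert (a < t' < a + del /\ t' <= t). { unfold t'. unfold Rmin; destruct Rle_dec; lra. }
    assert (W t' > - (- W t / 2)) by (apply Hd; lra).
    assert (W t' <= W t) by (apply HWm; lra). lra. }
  set (Rq := fun t => y t / u t).
  assert (HRm: forall t1 t2, a < t1 -> t1 <= t2 -> t2 < b -> Rq t1 <= Rq t2).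
  { apply (mono_of_deriv Rq (fun t => W t / (u t * u t)) a b).
    intros t Ht. unfold Rq. eapply dpl_eq. apply dpl_div. apply Hy; auto. apply Hu; auto.
    specialize (Hu0 t Ht); lra. unfold W. field. specialize (Hu0 t Ht); lra.
    intros t Ht. unfold Rdiv. apply Rmult_le_pos. auto. left; apply Rinv_0_lt_compat.
    specialize (Hu0 t Ht); nra. }
  intros t Ht. destruct (Rle_lt_dec (C * u t) (y t)) as [|Hn]; [lra|]. exfalso.
  assert (Hut := Hu0 t Ht).
  set (eps := (C - Rq t) / 2).
  assert (HRt: Rq t < C). { unfold Rq. apply (Rmult_lt_reg_r (u t)); auto. field_simplify; lra. }
  destruct (HR eps t) as [t' [Ht' Hy']]. unfold eps; lra. lra.
  assert (Rq t' <= Rq t) by (apply HRm; lra).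
  assert (Rq t' >= C - eps). { unfold Rq. assert (Hu' := Hu0 t' ltac:(lra)).
    apply Rle_ge. apply (Rmult_le_reg_r (u t')); auto. field_simplify; lra. }
  unfold eps in *. lra.
Qed.

Definition u1 a t := 2 / PI * sin (PI / 2 * (t - a)).
Definition du1 a t := cos (PI / 2 * (t - a)).
Definition ddu1 a t := - (PI / 2) * sin (PI / 2 * (t - a)).

Lemma u1_d a t : dpl (u1 a) t (du1 a t).
Proof. unfold u1, du1. eapply dpl_eq. apply dpl_scal. apply (dpl_comp (fun t => PI/2*(t-a)) sin).
  apply dpl_scal. apply dpl_minus. apply dpl_id. apply dpl_const. apply derivable_pt_lim_sin.
  field. pose PI_RGT_0; lra. Qed.
Lemma du1_d a t : dpl (du1 a) t (ddu1 a t).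
Proof. unfold ddu1, du1. eapply dpl_eq. apply (dpl_comp (fun t => PI/2*(t-a)) cos).
  apply dpl_scal. apply dpl_minus. apply dpl_id. apply dpl_const. apply derivable_pt_lim_cos.
  ring. Qed.
Lemma ddu1_eq a t : ddu1 a t = - ((PI^2/2) / 2) * u1 a t.
Proof. unfold ddu1, u1. field. pose PI_RGT_0; lra. Qed.
Lemma u1_a a : u1 a a = 0.
Proof. unfold u1. replace (PI/2*(a-a)) with 0 by ring. rewrite sin_0; ring. Qed.
Lemma du1_a a : du1 a a = 1.
Proof. unfold du1. replace (PI/2*(a-a)) with 0 by ring. apply cos_0. Qed.
Lemma u1_pos a t : a < t < a + 2 -> 0 < u1 a t.
Proof. intros H. unfold u1. pose PI_RGT_0. apply Rmult_lt_0_compat. apply Rdiv_lt_0_compat; lra.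
  apply sin_gt_0; nra. Qed.

Definition T t := 1/2 * ln ((1 + t) / (1 - t)).
Definition u2 a t := sqrt (1 - a*a) * sqrt (1 - t*t) * (T t - T a).
Definition du2 a t := sqrt (1 - a*a) * (1 - t * (T t - T a)) / sqrt (1 - t*t).
Definition ddu2 a t := - (2 / ((1 - t*t)*(1-t*t)) / 2) * u2 a t.

Lemma T_d t : -1 < t < 1 -> dpl T t (1 / (1 - t*t)).
Proof. intros H. unfold T. eapply dpl_eq. apply dpl_scal. apply (dpl_comp (fun t => (1+t)/(1-t)) ln).
  apply dpl_div. apply dpl_plus. apply dpl_const. apply dpl_id. apply dpl_minus. apply dpl_const. apply dpl_id.
  lra. apply derivable_pt_lim_ln. apply Rdiv_lt_0_compat; lra.
  field. repeat split; try lra. nra. Qed.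

Lemma sq_d t : -1 < t < 1 -> dpl (fun t => sqrt (1 - t*t)) t (- t / sqrt (1 - t*t)).
Proof. intros H. assert (0 < 1 - t*t) by nra.
  eapply dpl_eq. apply (dpl_comp (fun t => 1 - t*t) sqrt).
  apply dpl_minus. apply dpl_const. apply dpl_mult; apply dpl_id. apply derivable_pt_lim_sqrt; auto.
  cbv beta. field. apply Rgt_not_eq. apply sqrt_lt_R0; auto. Qed.

Lemma u2_d a t : -1 < t < 1 -> dpl (u2 a) t (du2 a t).
Proof. intros H. assert (Hp: 0 < 1 - t*t) by nra. assert (Hs := sqrt_lt_R0 _ Hp).
  assert (Hss := sqrt_sqrt _ (Rlt_le _ _ Hp)).
  unfold u2, du2. eapply dpl_eq. apply dpl_mult. apply dpl_scal. apply sq_d; auto.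
  apply dpl_minus. apply T_d; auto. apply dpl_const.
  cbv beta. set (s := sqrt (1 - t*t)) in *. replace (1 - t*t) with (s*s). field. lra. Qed.

Lemma du2_d a t : -1 < t < 1 -> dpl (du2 a) t (ddu2 a t).
Proof. intros H. assert (Hp: 0 < 1 - t*t) by nra. assert (Hs := sqrt_lt_R0 _ Hp).
  assert (Hss := sqrt_sqrt _ (Rlt_le _ _ Hp)).
  unfold du2, ddu2, u2. eapply dpl_eq. apply dpl_div. apply dpl_scal. apply dpl_minus. apply dpl_const.
  apply dpl_mult. apply dpl_id. apply dpl_minus. apply T_d; auto. apply dpl_const. apply sq_d; auto. lra.
  cbv beta. set (s := sqrt (1 - t*t)) in *. replace (1 - t*t) with (s*s). field_simplify_eq; [|lra]. replace (s^2) with (1 - t^2) by nra. ring. Qed.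

Lemma u2_a a : u2 a a = 0.
Proof. unfold u2. ring. Qed.
Lemma du2_a a : -1 < a < 1 -> du2 a a = 1.
Proof. intros H. unfold du2. replace (T a - T a) with 0 by ring.
  assert (0 < sqrt (1 - a*a)) by (apply sqrt_lt_R0; nra). field. lra. Qed.
Lemma T_lt a t : -1 < a -> a < t -> t < 1 -> T a < T t.
Proof. intros. unfold T. apply Rmult_lt_compat_l. lra. apply ln_increasing.
  apply Rdiv_lt_0_compat; lra. apply (Rmult_lt_reg_r ((1-a)*(1-t))). nra.
  field_simplify; try lra. Qed.
Lemma u2_pos a t : -1 < a -> a < t -> t < 1 -> 0 < u2 a t.
Proof. intros. unfold u2. apply Rmult_lt_0_compat. apply Rmult_lt_0_compat; apply sqrt_lt_R0; nra.
  pose proof (T_lt a t); lra. Qed.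

Definition wv (phi : R -> nat -> R) a t := subv (phi t) (phi a).
Definition WW n phi a t := dotn n (wv phi a t) (wv phi a t).
Definition W1 n phi (d1 : R -> nat -> R) a t := dotn n (wv phi a t) (d1 t).
Definition W2 n phi (d2 : R -> nat -> R) a t := dotn n (wv phi a t) (d2 t).
Definition EE n (f g : R -> nat -> R) t := dotn n (f t) (g t).
Definition Kf n d1 t := exp (- (1/4) * ln (EE n d1 d1 t)).
Definition yv n phi d1 a t := sqrt (WW n phi a t) * Kf n d1 t.
Definition Lv n phi d1 d2 a t := W1 n phi d1 a t / WW n phi a t - EE n d1 d2 t / (2 * EE n d1 d1 t).
Definition Lpv n phi d1 d2 d3 a t :=
  let ww := WW n phi a t in let w1 := W1 n phi d1 a t in let w2 := W2 n phi d2 a t in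
  let e11 := EE n d1 d1 t in let e12 := EE n d1 d2 t in let e22 := EE n d2 d2 t in
  let e13 := EE n d1 d3 t in
  ((e11+w2)*ww - 2*w1*w1)/(ww*ww) - ((e22+e13)*(2*e11) - 2*(2*e12)*e12)/((2*e11)*(2*e11)).

Lemma ww_d n phi d1 d2 d3 a t : C3_curve n phi d1 d2 d3 -> -1 < t < 1 ->
  dpl (WW n phi a) t (2 * W1 n phi d1 a t).
Proof. intros HC Ht. unfold WW, W1. eapply dpl_eq. apply (dotn_deriv n (wv phi a) (wv phi a) (d1 t) (d1 t)).
  intros i Hi. destruct (HC t Ht i Hi) as [H1 _]. unfold wv, subv.
  split; (eapply dpl_eq; [apply dpl_minus; [exact H1 | apply dpl_const] | ring]).
  rewrite dotn_sym. ring. Qed.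

Lemma w1_d n phi d1 d2 d3 a t : C3_curve n phi d1 d2 d3 -> -1 < t < 1 ->
  dpl (W1 n phi d1 a) t (EE n d1 d1 t + W2 n phi d2 a t).
Proof. intros HC Ht. unfold W1, W2, EE. eapply dpl_eq. apply (dotn_deriv n (wv phi a) d1 (d1 t) (d2 t)).
  intros i Hi. destruct (HC t Ht i Hi) as [H1 [H2 _]]. unfold wv, subv.
  split. eapply dpl_eq; [apply dpl_minus; [exact H1 | apply dpl_const] | ring]. exact H2.
  ring. Qed.

Lemma e11_d n phi d1 d2 d3 t : C3_curve n phi d1 d2 d3 -> -1 < t < 1 ->
  dpl (EE n d1 d1) t (2 * EE n d1 d2 t).
Proof. intros HC Ht. unfold EE. eapply dpl_eq. apply (dotn_deriv n d1 d1 (d2 t) (d2 t)).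
  intros i Hi. destruct (HC t Ht i Hi) as [H1 [H2 _]]. auto.
  rewrite (dotn_sym n (d2 t)). ring. Qed.

Lemma e12_d n phi d1 d2 d3 t : C3_curve n phi d1 d2 d3 -> -1 < t < 1 ->
  dpl (EE n d1 d2) t (EE n d2 d2 t + EE n d1 d3 t).
Proof. intros HC Ht. unfold EE. eapply dpl_eq. apply (dotn_deriv n d1 d2 (d2 t) (d3 t)).
  intros i Hi. destruct (HC t Ht i Hi) as [H1 [H2 [H3 _]]]. auto.
  ring. Qed.

Lemma K_d n phi d1 d2 d3 t : C3_curve n phi d1 d2 d3 -> -1 < t < 1 -> 0 < EE n d1 d1 t ->
  dpl (Kf n d1) t (Kf n d1 t * (- EE n d1 d2 t / (2 * EE n d1 d1 t))).
Proof. intros HC Ht He. unfold Kf. eapply dpl_eq.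
  apply (dpl_comp (fun t => - (1/4) * ln (EE n d1 d1 t)) exp). apply dpl_scal.
  apply (dpl_comp (EE n d1 d1) ln). eapply e11_d; eauto. apply derivable_pt_lim_ln; auto.
  apply derivable_pt_lim_exp. field. lra. Qed.

Lemma y_d n phi d1 d2 d3 a t : C3_curve n phi d1 d2 d3 -> -1 < t < 1 -> 0 < EE n d1 d1 t ->
  0 < WW n phi a t -> dpl (yv n phi d1 a) t (yv n phi d1 a t * Lv n phi d1 d2 a t).
Proof. intros HC Ht He Hw. unfold yv, Lv. eapply dpl_eq. apply dpl_mult.
  apply (dpl_comp (WW n phi a) sqrt). eapply ww_d; eauto. apply derivable_pt_lim_sqrt; auto.
  eapply K_d; eauto.
  assert (Hs := sqrt_lt_R0 _ Hw). assert (Hss := sqrt_sqrt _ (Rlt_le _ _ Hw)).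
  set (s := sqrt (WW n phi a t)) in *. rewrite <- Hss. field. lra. Qed.

Lemma L_d n phi d1 d2 d3 a t : C3_curve n phi d1 d2 d3 -> -1 < t < 1 -> 0 < EE n d1 d1 t ->
  0 < WW n phi a t -> dpl (Lv n phi d1 d2 a) t (Lpv n phi d1 d2 d3 a t).
Proof. intros HC Ht He Hw. unfold Lv, Lpv. eapply dpl_eq. apply dpl_minus.
  apply dpl_div. eapply w1_d; eauto. eapply ww_d; eauto. lra.
  apply dpl_div. eapply e12_d; eauto. apply dpl_scal. eapply e11_d; eauto. lra.
  cbv beta. field. lra. Qed.

Lemma normn_sq n f : normn n f ^ 2 = dotn n f f.
Proof. unfold normn. simpl. rewrite Rmult_1_r. apply sqrt_sqrt. apply dotn_nonneg. Qed.

Lemma key_vec n phi d1 d2 d3 a t : 0 < EE n d1 d1 t -> 0 < WW n phi a t ->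
  0 <= Lpv n phi d1 d2 d3 a t + Lv n phi d1 d2 a t ^ 2 + S1 n d1 d2 d3 t / 2.
Proof. intros He Hw.
  assert (S1 n d1 d2 d3 t = EE n d1 d3 t / EE n d1 d1 t - 3 * EE n d1 d2 t ^2 / EE n d1 d1 t ^2
     + 3/2 * EE n d2 d2 t / EE n d1 d1 t) as ->.
  { unfold S1, EE. rewrite !normn_sq. replace (normn n (d1 t) ^ 4) with ((normn n (d1 t) ^ 2)^2) by ring.
    rewrite normn_sq. reflexivity. }
  unfold Lpv, Lv. cbv zeta.
  replace ((EE n d1 d3 t / EE n d1 d1 t - 3 * EE n d1 d2 t ^2 / EE n d1 d1 t ^2
     + 3/2 * EE n d2 d2 t / EE n d1 d1 t) / 2) with
   (/2 * (EE n d1 d3 t / EE n d1 d1 t - 3 * EE n d1 d2 t ^2 / EE n d1 d1 t ^2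
     + 3/2 * EE n d2 d2 t / EE n d1 d1 t)) by (field; lra).
  apply key_alg; auto.
  set (e11 := EE n d1 d1 t). set (w1 := W1 n phi d1 a t). set (ww := WW n phi a t).
  set (e12 := EE n d1 d2 t).
  pose proof (dotn_nonneg n (fun i => (2*e11^2) * wv phi a t i + (-2*e11*w1 - ww*e12) * d1 t i + (ww*e11) * d2 t i)) as G.
  rewrite dotn_comb3 in G. exact G.
Qed.

Lemma lb_mult x y : - (Rabs x * Rabs y) <= x * y.
Proof. rewrite <- Rabs_mult. pose proof (Rle_abs (- (x*y))). rewrite Rabs_Ropp in *. lra. Qed.

Lemma WW_a n phi a : WW n phi a a = 0.
Proof. unfold WW, wv, subv, dotn. induction n; simpl. auto. rewrite IHn. ring. Qed.

Lemma Kpos n d1 t : 0 < Kf n d1 t.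
Proof. unfold Kf. apply exp_pos. Qed.

Lemma cont_y n phi d1 d2 d3 a t : C3_curve n phi d1 d2 d3 -> -1 < t < 1 -> 0 < EE n d1 d1 t ->
  continuity_pt (yv n phi d1 a) t.
Proof. intros HC Ht He. unfold yv. apply cont_mult.
  apply (cont_comp (WW n phi a) sqrt). eapply dpl_cont. eapply ww_d; eauto.
  apply continuity_pt_sqrt. apply dotn_nonneg.
  eapply dpl_cont. eapply K_d; eauto. Qed.

Lemma abs_w1 n phi d1 a t : 0 < WW n phi a t ->
  Rabs (W1 n phi d1 a t) <= sqrt (WW n phi a t) * sqrt (EE n d1 d1 t).
Proof. intros Hw. pose proof (CS n (wv phi a t) (d1 t)) as H. fold (W1 n phi d1 a t) in H.
  fold (WW n phi a t) in H. fold (EE n d1 d1 t) in H.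
  assert (He := dotn_nonneg n (d1 t)). fold (EE n d1 d1 t) in He.
  rewrite <- sqrt_mult; try lra.
  assert (0 <= sqrt (WW n phi a t * EE n d1 d1 t)) by apply sqrt_pos.
  assert (sqrt (WW n phi a t * EE n d1 d1 t) ^2 = WW n phi a t * EE n d1 d1 t).
  { simpl. rewrite Rmult_1_r. apply sqrt_sqrt. nra. }
  assert (Rabs (W1 n phi d1 a t) ^2 = W1 n phi d1 a t ^2).
  { simpl. rewrite !Rmult_1_r. rewrite <- Rabs_mult. apply Rabs_right. nra. }
  pose proof (Rabs_pos (W1 n phi d1 a t)). nra.
Qed.

Lemma HW0_vec n phi d1 d2 d3 a (u du : R -> R) : C3_curve n phi d1 d2 d3 ->
  (forall t, -1 < t < 1 -> 0 < EE n d1 d1 t) -> -1 < a < 1 ->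
  continuity_pt u a -> continuity_pt du a -> u a = 0 ->
  forall eps, eps > 0 -> exists del, del > 0 /\ forall t, a < t < a + del ->
    yv n phi d1 a t * (u t * Lv n phi d1 d2 a t - du t) > - eps.
Proof.
  intros HC He Ha Hu Hdu Hu0 eps Heps.
  set (G := fun t => Rabs (u t) * (Kf n d1 t * sqrt (EE n d1 d1 t) +
      yv n phi d1 a t * (Rabs (EE n d1 d2 t) / (2 * EE n d1 d1 t))) + yv n phi d1 a t * Rabs (du t)).
  assert (HG: continuity_pt G a).
  { unfold G. apply cont_plus. apply cont_mult. apply cont_abs; auto.
    apply cont_plus. apply cont_mult. eapply dpl_cont. eapply K_d; eauto.
    apply (cont_comp (EE n d1 d1) sqrt). eapply dpl_cont. eapply e11_d; eauto.
    apply continuity_pt_sqrt. apply dotn_nonneg.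
    apply cont_mult. eapply cont_y; eauto.
    apply (continuity_pt_div (fun t => Rabs (EE n d1 d2 t)) (fun t => 2 * EE n d1 d1 t)).
    apply cont_abs. eapply dpl_cont. eapply e12_d; eauto.
    eapply dpl_cont. apply dpl_scal. eapply e11_d; eauto. specialize (He a Ha); lra.
    apply cont_mult. eapply cont_y; eauto. apply cont_abs; auto. }
  assert (HGa: G a = 0). { unfold G, yv. rewrite Hu0, WW_a, sqrt_0, Rabs_R0. ring. }
  destruct (cont_eps G a HG eps Heps) as [del [Hdel Hd]].
  exists (Rmin del (1 - a)). split. unfold Rmin; destruct Rle_dec; lra.
  intros t Ht. assert (Ht1: t < 1) by (pose proof (Rmin_r del (1-a)); lra).
  assert (Htd: t - a < del) by (pose proof (Rmin_l del (1-a)); lra).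
  specialize (Hd t ltac:(rewrite Rabs_right; lra)). rewrite HGa in Hd.
  assert (HGt: G t < eps) by (pose proof (Rle_abs (G t - 0)); lra).
  assert (Het := He t ltac:(lra)).
  assert (HK := Kpos n d1 t).
  assert (Hy0: 0 <= yv n phi d1 a t) by (unfold yv; apply Rmult_le_pos; [apply sqrt_pos|lra]).
  enough (- G t <= yv n phi d1 a t * (u t * Lv n phi d1 d2 a t - du t)) by lra.
  destruct (Rle_lt_dec (WW n phi a t) 0) as [Hw0|Hwp].
  - assert (WW n phi a t = 0) by (pose proof (dotn_nonneg n (wv phi a t)); unfold WW in *; lra).
    assert (yv n phi d1 a t = 0) by (unfold yv; rewrite H, sqrt_0; ring).
    rewrite H0. unfold G. rewrite H0.
    assert (0 <= Rabs (u t) * (Kf n d1 t * sqrt (EE n d1 d1 t) + 0 * (Rabs (EE n d1 d2 t) / (2 * EE n d1 d1 t)))).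
    { apply Rmult_le_pos. apply Rabs_pos. rewrite Rmult_0_l, Rplus_0_r. apply Rmult_le_pos. lra. apply sqrt_pos. }
    lra.
  - set (A := yv n phi d1 a t * (W1 n phi d1 a t / WW n phi a t)).
    assert (HA: Rabs A <= Kf n d1 t * sqrt (EE n d1 d1 t)).
    { unfold A, yv. assert (Hs := sqrt_lt_R0 _ Hwp). assert (Hss := sqrt_sqrt _ (Rlt_le _ _ Hwp)).
      replace (sqrt (WW n phi a t) * Kf n d1 t * (W1 n phi d1 a t / WW n phi a t)) with
        (Kf n d1 t * (W1 n phi d1 a t / sqrt (WW n phi a t))) by (set (s := sqrt (WW n phi a t)) in *; rewrite <- Hss; field; lra).
      rewrite Rabs_mult, (Rabs_right (Kf n d1 t)) by lra. apply Rmult_le_compat_l. lra.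
      unfold Rdiv. rewrite Rabs_mult, Rabs_Rinv, (Rabs_right (sqrt _)) by lra.
      pose proof (abs_w1 n phi d1 a t Hwp).
      apply (Rmult_le_reg_r (sqrt (WW n phi a t))); auto. field_simplify; lra. }
    replace (yv n phi d1 a t * (u t * Lv n phi d1 d2 a t - du t)) with
      (u t * A + (- u t) * (yv n phi d1 a t * (EE n d1 d2 t / (2 * EE n d1 d1 t))) + yv n phi d1 a t * (- du t))
      by (unfold A, Lv; ring).
    pose proof (lb_mult (u t) A). pose proof (lb_mult (- u t) (yv n phi d1 a t * (EE n d1 d2 t / (2 * EE n d1 d1 t)))).
    pose proof (lb_mult (yv n phi d1 a t) (- du t)).
    rewrite Rabs_Ropp in *. rewrite Rabs_mult in H0. rewrite (Rabs_right (yv n phi d1 a t)) in H0, H1 by lra.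
    unfold Rdiv in H0. rewrite Rabs_mult, Rabs_Rinv, (Rabs_right (2 * EE n d1 d1 t)) in H0 by lra.
    assert (Rabs (u t) * Rabs A <= Rabs (u t) * (Kf n d1 t * sqrt (EE n d1 d1 t))) by (apply Rmult_le_compat_l; auto; apply Rabs_pos).
    unfold G. unfold Rdiv. lra.
Qed.

Lemma dotn_0r n f : dotn n f (fun _ => 0) = 0.
Proof. unfold dotn; induction n; simpl; auto. rewrite IHn; ring. Qed.
Lemma dotn_wa n phi a f : dotn n (wv phi a a) f = 0.
Proof. unfold dotn, wv, subv; induction n; simpl; auto. rewrite IHn; ring. Qed.

Lemma HR_vec n phi d1 d2 d3 a (u : R -> R) : C3_curve n phi d1 d2 d3 ->
  (forall t, -1 < t < 1 -> 0 < EE n d1 d1 t) -> -1 < a < 1 ->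
  dpl u a 1 -> u a = 0 ->
  forall eps c, eps > 0 -> c > a -> exists t', a < t' < c /\
    yv n phi d1 a t' >= (Kf n d1 a * sqrt (EE n d1 d1 a) - eps) * u t'.
Proof.
  intros HC He Ha Hu Hu0 eps c Heps Hc.
  assert (Hea := He a Ha). assert (Hs := sqrt_lt_R0 _ Hea). assert (Hss := sqrt_sqrt _ (Rlt_le _ _ Hea)).
  set (g := fun t => dotn n (wv phi a t) (d1 a)).
  assert (Hg: dpl g a (EE n d1 d1 a)).
  { unfold g. eapply dpl_eq. apply (dotn_deriv n (wv phi a) (fun _ => d1 a) (d1 a) (fun _ => 0)).
    intros i Hi. destruct (HC a Ha i Hi) as [H1 _]. unfold wv, subv. split.
    eapply dpl_eq; [apply dpl_minus; [exact H1 | apply dpl_const] | ring]. apply dpl_const.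
    rewrite dotn_0r. unfold EE. ring. }
  set (C := Kf n d1 a * sqrt (EE n d1 d1 a)).
  set (F := fun t => Kf n d1 t * g t / sqrt (EE n d1 d1 a) - (C - eps) * u t).
  assert (HF: dpl F a eps).
  { unfold F. eapply dpl_eq. apply dpl_minus. unfold Rdiv. apply (dpl_mult (fun t => Kf n d1 t * g t) (fun _ => / sqrt (EE n d1 d1 a))).
    apply dpl_mult. eapply K_d; eauto. exact Hg. apply dpl_const. apply dpl_scal. exact Hu.
    cbv beta. unfold g. rewrite dotn_wa. unfold C. set (s := sqrt (EE n d1 d1 a)) in *. rewrite <- Hss. field. lra. }
  assert (HFa: F a = 0). { unfold F, g. rewrite dotn_wa, Hu0. field. lra. }
  destruct (HF (eps/2) ltac:(lra)) as [[del Hdel] Hd]. simpl in Hd.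
  set (h := Rmin (del/2) (Rmin ((c-a)/2) ((1-a)/2))).
  assert (Hh: 0 < h /\ h < del /\ h < c - a /\ h < 1 - a).
  { unfold h, Rmin. repeat destruct Rle_dec; lra. }
  specialize (Hd h ltac:(lra) ltac:(rewrite Rabs_right; lra)). rewrite HFa in Hd.
  assert (HFp: F (a + h) > 0).
  { assert ((F (a+h) - 0)/h > eps/2). { pose proof (Rle_abs (- ((F (a + h) - 0) / h - eps))). rewrite Rabs_Ropp in H. lra. }
    apply (Rmult_lt_reg_r (/h)). apply Rinv_0_lt_compat; lra. unfold Rdiv in H. lra. }
  exists (a + h). split. lra.
  unfold F in HFp.
  enough (Kf n d1 (a+h) * g (a+h) / sqrt (EE n d1 d1 a) <= yv n phi d1 a (a+h)) by (fold C; lra).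
  unfold yv. assert (HK := Kpos n d1 (a+h)).
  replace (Kf n d1 (a+h) * g (a+h) / sqrt (EE n d1 d1 a)) with (Kf n d1 (a+h) * (g (a+h) / sqrt (EE n d1 d1 a))) by (field; lra).
  rewrite (Rmult_comm (sqrt _)). apply Rmult_le_compat_l. lra.
  apply (Rmult_le_reg_r (sqrt (EE n d1 d1 a))); auto.
  replace (g (a + h) / sqrt (EE n d1 d1 a) * sqrt (EE n d1 d1 a)) with (g (a+h)) by (field; lra).
  pose proof (CS n (wv phi a (a+h)) (d1 a)) as HCS. fold (g (a+h)) in HCS.
  fold (WW n phi a (a+h)) in HCS. fold (EE n d1 d1 a) in HCS.
  destruct (Rle_lt_dec (g (a+h)) 0). { pose proof (sqrt_pos (WW n phi a (a+h))). nra. }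
  rewrite <- sqrt_mult; [| apply dotn_nonneg | lra].
  assert (0 <= sqrt (WW n phi a (a+h) * EE n d1 d1 a)) by apply sqrt_pos.
  assert (sqrt (WW n phi a (a+h) * EE n d1 d1 a) ^2 = WW n phi a (a+h) * EE n d1 d1 a).
  { simpl. rewrite Rmult_1_r. apply sqrt_sqrt. pose proof (dotn_nonneg n (wv phi a (a+h))). unfold WW in *. nra. }
  nra.
Qed.

Lemma comp_interval n phi d1 d2 d3 a b (u du ddu P : R -> R) :
  C3_curve n phi d1 d2 d3 ->
  (forall t, -1 < t < 1 -> 0 < EE n d1 d1 t) -> -1 < a -> a < b -> b <= 1 ->
  (forall t, a < t < b -> S1 n d1 d2 d3 t <= P t) ->
  (forall t, a < t < b -> 0 < WW n phi a t) ->
  (forall t, -1 < t < 1 -> dpl u t (du t) /\ dpl du t (ddu t)) ->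
  (forall t, a < t < b -> ddu t = - (P t / 2) * u t) ->
  u a = 0 -> du a = 1 -> (forall t, a < t < b -> 0 < u t) ->
  forall t, a < t < b -> yv n phi d1 a t >= Kf n d1 a * sqrt (EE n d1 d1 a) * u t.
Proof.
  intros HC He Ha Hab Hb HP Hw Hu Hddu Hu0 Hdu0 Hup.
  assert (Ha1: -1 < a < 1) by lra.
  apply (sturm a b _ (yv n phi d1 a) (Lv n phi d1 d2 a) (Lpv n phi d1 d2 d3 a) u du ddu P); auto.
  - intros t Ht. eapply y_d; eauto; try lra; try (apply He; lra); try (apply Hw; auto).
  - intros t Ht. eapply L_d; eauto; try lra; try (apply He; lra); try (apply Hw; auto).
  - intros t Ht. pose proof (key_vec n phi d1 d2 d3 a t ltac:(apply He; lra) ltac:(apply Hw; auto)).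
    pose proof (HP t Ht). lra.
  - intros t Ht. unfold yv. apply Rmult_le_pos. apply sqrt_pos. left; apply Kpos.
  - intros t Ht. apply Hu; lra.
  - intros t Ht. apply Hu; lra.
  - apply HW0_vec with d3; auto. eapply dpl_cont. apply (Hu a Ha1). eapply dpl_cont. apply (Hu a Ha1).
  - intros eps c He' Hc. apply HR_vec with d2 d3; auto. rewrite <- Hdu0. apply (Hu a Ha1).
Qed.

Lemma near_a_pos n phi d1 d2 d3 a : C3_curve n phi d1 d2 d3 ->
  (forall t, -1 < t < 1 -> 0 < EE n d1 d1 t) -> -1 < a < 1 ->
  exists del, del > 0 /\ forall t, a < t < a + del -> 0 < WW n phi a t.
Proof.
  intros HC He Ha. assert (Hea := He a Ha).
  set (g := fun t => dotn n (wv phi a t) (d1 a)).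
  assert (Hg: dpl g a (EE n d1 d1 a)).
  { unfold g. eapply dpl_eq. apply (dotn_deriv n (wv phi a) (fun _ => d1 a) (d1 a) (fun _ => 0)).
    intros i Hi. destruct (HC a Ha i Hi) as [H1 _]. unfold wv, subv. split.
    eapply dpl_eq; [apply dpl_minus; [exact H1 | apply dpl_const] | ring]. apply dpl_const.
    rewrite dotn_0r. unfold EE. ring. }
  destruct (Hg (EE n d1 d1 a / 2) ltac:(lra)) as [[del Hdel] Hd]. simpl in Hd.
  exists del. split; auto. intros t Ht.
  specialize (Hd (t - a) ltac:(lra) ltac:(rewrite Rabs_right; lra)).
  replace (a + (t - a)) with t in Hd by ring.
  assert (Hga: g a = 0) by (unfold g; apply dotn_wa). rewrite Hga in Hd.
  assert (g t / (t - a) > EE n d1 d1 a / 2).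
  { pose proof (Rle_abs (- ((g t - 0) / (t - a) - EE n d1 d1 a))). rewrite Rabs_Ropp in H.
    replace ((g t - 0) / (t - a)) with (g t / (t-a)) in H, Hd by (unfold Rdiv; ring). lra. }
  assert (Hgt: g t > 0).
  { apply (Rmult_lt_reg_r (/ (t - a))). apply Rinv_0_lt_compat; lra. unfold Rdiv in H. lra. }
  pose proof (CS n (wv phi a t) (d1 a)) as HCS. fold (g t) in HCS. fold (WW n phi a t) in HCS.
  fold (EE n d1 d1 a) in HCS. pose proof (dotn_nonneg n (wv phi a t)). fold (WW n phi a t) in H0.
  destruct H0 as [|H0]; auto. rewrite <- H0 in HCS. nra.
Qed.

Lemma all_pos n phi d1 d2 d3 a (u du ddu P : R -> R) :
  C3_curve n phi d1 d2 d3 ->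
  (forall t, -1 < t < 1 -> 0 < EE n d1 d1 t) -> -1 < a < 1 ->
  (forall t, a < t < 1 -> S1 n d1 d2 d3 t <= P t) ->
  (forall t, -1 < t < 1 -> dpl u t (du t) /\ dpl du t (ddu t)) ->
  (forall t, a < t < 1 -> ddu t = - (P t / 2) * u t) ->
  u a = 0 -> du a = 1 -> (forall t, a < t < 1 -> 0 < u t) ->
  forall x, a < x < 1 -> 0 < WW n phi a x.
Proof.
  intros HC He Ha HP Hu Hddu Hu0 Hdu0 Hup x Hx.
  destruct (Rlt_le_dec 0 (WW n phi a x)) as [|Hz]; auto. exfalso.
  assert (Hnn: forall t, 0 <= WW n phi a t) by (intro; apply dotn_nonneg).
  set (Ep := fun s => a < - s /\ - s < 1 /\ WW n phi a (- s) = 0).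
  assert (Hb: bound Ep). { exists (- a). intros s Hs. unfold Ep in Hs. lra. }
  assert (Hne: exists s, Ep s). { exists (- x). unfold Ep. rewrite Ropp_involutive. specialize (Hnn x). lra. }
  destruct (completeness Ep Hb Hne) as [m [Hm1 Hm2]].
  set (t0 := - m).
  assert (H1: forall s, a < s < 1 -> WW n phi a s = 0 -> t0 <= s).
  { intros s Hs Hws. assert (Ep (- s)) by (unfold Ep; rewrite Ropp_involutive; lra).
    specialize (Hm1 _ H). unfold t0; lra. }
  assert (H2: forall eps, eps > 0 -> exists s, a < s < 1 /\ WW n phi a s = 0 /\ s < t0 + eps).
  { intros eps Heps. destruct (Classical_Prop.classic (exists s, a < s < 1 /\ WW n phi a s = 0 /\ s < t0 + eps)) as [|Hn]; auto.
    exfalso. assert (is_upper_bound Ep (m - eps)).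
    { intros s Hs. unfold Ep in Hs. destruct (Rle_lt_dec s (m - eps)) as [|Hl]; auto. exfalso. apply Hn.
      exists (- s). split. lra. split. tauto. unfold t0. lra. }
    specialize (Hm2 _ H). lra. }
  assert (Htx: t0 <= x) by (apply H1; auto; specialize (Hnn x); lra).
  destruct (near_a_pos n phi d1 d2 d3 a HC He Ha) as [del [Hdel Hnear]].
  assert (Hta: a + del <= t0).
  { destruct (Rle_lt_dec (a + del) t0) as [|Hl]; auto. exfalso.
    destruct (H2 (a + del - t0)) as [s [Hs1 [Hs2 Hs3]]]. lra.
    assert (0 < WW n phi a s) by (apply Hnear; lra). lra. }
  assert (Hw0: WW n phi a t0 = 0).
  { destruct (Hnn t0) as [Hp|]; auto. exfalso.
    assert (Hc: continuity_pt (WW n phi a) t0) by (eapply dpl_cont; eapply ww_d; eauto; lra).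
    destruct (cont_eps _ _ Hc (WW n phi a t0) Hp) as [eta [Heta Hd]].
    destruct (H2 eta Heta) as [s [Hs1 [Hs2 Hs3]]]. assert (t0 <= s) by (apply H1; auto).
    specialize (Hd s ltac:(rewrite Rabs_right; lra)). rewrite Hs2 in Hd.
    rewrite Rabs_left in Hd; lra. }
  assert (Hin: forall t, a < t < t0 -> 0 < WW n phi a t).
  { intros t Ht. destruct (Hnn t) as [|He0]; auto. assert (t0 <= t) by (apply H1; auto; lra). lra. }
  assert (Hcmp := comp_interval n phi d1 d2 d3 a t0 u du ddu P HC He ltac:(lra) ltac:(lra) ltac:(lra)
     ltac:(intros; apply HP; lra) Hin Hu ltac:(intros; apply Hddu; lra) Hu0 Hdu0 ltac:(intros; apply Hup; lra)).
  set (C := Kf n d1 a * sqrt (EE n d1 d1 a)).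
  assert (HC0: 0 < C). { unfold C. apply Rmult_lt_0_compat. apply Kpos. apply sqrt_lt_R0. apply He; lra. }
  set (Hf := fun t => yv n phi d1 a t - C * u t).
  assert (Hcont: continuity_pt Hf t0).
  { unfold Hf. apply cont_minus. eapply cont_y; eauto. lra. apply He; lra.
    apply cont_mult. apply cont_const. eapply dpl_cont. apply Hu. lra. }
  assert (Hft0: Hf t0 < 0).
  { unfold Hf, yv. rewrite Hw0, sqrt_0. assert (0 < u t0) by (apply Hup; lra). nra. }
  destruct (cont_eps _ _ Hcont (- Hf t0) ltac:(lra)) as [eta [Heta Hd]].
  set (t := Rmax (t0 - eta/2) ((a + t0)/2)).
  assert (Ht: a < t < t0 /\ t0 - t < eta). { unfold t, Rmax. destruct Rle_dec; lra. }
  specialize (Hd t ltac:(rewrite Rabs_left; lra)).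
  assert (Hf t < 0). { pose proof (Rle_abs (Hf t - Hf t0)). lra. }
  specialize (Hcmp t ltac:(lra)). fold C in Hcmp. unfold Hf in H. lra.
Qed.

Lemma sqrt_exp z : 0 < z -> sqrt z = exp (ln z / 2).
Proof. intros Hz. rewrite <- (exp_ln z) at 1 by auto.
  replace (ln z) with (ln z / 2 + ln z / 2) at 1 by field. rewrite exp_plus.
  apply sqrt_square. left; apply exp_pos. Qed.

Lemma half n phi d1 d2 d3 a x (u du ddu P : R -> R) :
  C3_curve n phi d1 d2 d3 ->
  (forall t, -1 < t < 1 -> 0 < EE n d1 d1 t) -> -1 < a -> a < x -> x < 1 ->
  (forall t, a < t < 1 -> S1 n d1 d2 d3 t <= P t) ->
  (forall t, -1 < t < 1 -> dpl u t (du t) /\ dpl du t (ddu t)) ->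
  (forall t, a < t < 1 -> ddu t = - (P t / 2) * u t) ->
  u a = 0 -> du a = 1 -> (forall t, a < t < 1 -> 0 < u t) ->
  normn n (subv (phi x) (phi a)) / sqrt (normn n (d1 x) * normn n (d1 a)) >= u x.
Proof.
  intros HC He Ha Hax Hx HP Hu Hddu Hu0 Hdu0 Hup.
  assert (Hpos := all_pos n phi d1 d2 d3 a u du ddu P HC He ltac:(lra) HP Hu Hddu Hu0 Hdu0 Hup).
  assert (Hc := comp_interval n phi d1 d2 d3 a 1 u du ddu P HC He Ha ltac:(lra) ltac:(lra) HP Hpos Hu Hddu Hu0 Hdu0 Hup x ltac:(lra)).
  unfold yv in Hc. unfold normn. fold (EE n d1 d1 x). fold (EE n d1 d1 a).
  change (dotn n (subv (phi x) (phi a)) (subv (phi x) (phi a))) with (WW n phi a x).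
  assert (Hex := He x ltac:(lra)). assert (Hea := He a ltac:(lra)).
  assert (E1: sqrt (sqrt (EE n d1 d1 x) * sqrt (EE n d1 d1 a)) = sqrt (EE n d1 d1 a) * Kf n d1 a / Kf n d1 x).
  { unfold Kf. rewrite !(sqrt_exp (EE _ _ _ _)) by auto. rewrite <- exp_plus.
    rewrite sqrt_exp by apply exp_pos. rewrite ln_exp. unfold Rdiv. rewrite <- exp_plus, <- exp_Ropp, <- exp_plus.
    f_equal. field. }
  rewrite E1. assert (HKa := Kpos n d1 a). assert (HKx := Kpos n d1 x).
  assert (Hs := sqrt_lt_R0 _ Hea).
  apply Rle_ge. apply (Rmult_le_reg_r (sqrt (EE n d1 d1 a) * Kf n d1 a / Kf n d1 x)).
  apply Rdiv_lt_0_compat; nra.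
  replace (sqrt (WW n phi a x) / (sqrt (EE n d1 d1 a) * Kf n d1 a / Kf n d1 x) *
     (sqrt (EE n d1 d1 a) * Kf n d1 a / Kf n d1 x)) with (sqrt (WW n phi a x)) by (field; lra).
  apply (Rmult_le_reg_r (Kf n d1 x)); auto.
  replace (u x * (sqrt (EE n d1 d1 a) * Kf n d1 a / Kf n d1 x) * Kf n d1 x) with
    (Kf n d1 a * sqrt (EE n d1 d1 a) * u x) by (field; lra). lra.
Qed.

Lemma normn_self n p : normn n (subv p p) = 0.
Proof. unfold normn, dotn, subv. replace (sumR n (fun i => (p i - p i) * (p i - p i))) with 0. apply sqrt_0.
  induction n; simpl; auto. rewrite <- IHn. ring. Qed.

Theorem mainTheorem4 (n : nat) (phi d1 d2 d3 : R -> nat -> R) :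
  C3_curve n phi d1 d2 d3 ->
  (forall x, -1 < x < 1 -> normn n (d1 x) <> 0) ->
  ((forall x, -1 < x < 1 -> S1 n d1 d2 d3 x <= PI ^ 2 / 2) ->
   forall x1 x2, -1 < x1 < 1 -> -1 < x2 < 1 ->
     normn n (subv (phi x1) (phi x2))
       / sqrt (normn n (d1 x1) * normn n (d1 x2))
     >= 2 / PI * sin (PI / 2 * Rabs (x1 - x2)))
  /\
  ((forall x, -1 < x < 1 -> S1 n d1 d2 d3 x <= 2 / (1 - x ^ 2) ^ 2) ->
   forall x1 x2, -1 < x1 < 1 -> -1 < x2 < 1 ->
     normn n (subv (phi x1) (phi x2))
       / sqrt (normn n (d1 x1) * normn n (d1 x2))
     >= sqrt ((1 - x1 ^ 2) * (1 - x2 ^ 2)) * dhyp x1 x2).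
Proof.
  intros HC Hnz.
  assert (He: forall t, -1 < t < 1 -> 0 < EE n d1 d1 t).
  { intros t Ht. specialize (Hnz t Ht). unfold normn in Hnz. unfold EE.
    destruct (dotn_nonneg n (d1 t)) as [|E]; auto. rewrite <- E, sqrt_0 in Hnz. lra. }
  split.
  - intros HS x1 x2 H1 H2.
    assert (G: forall a x, -1 < a -> a < x -> x < 1 ->
      normn n (subv (phi x) (phi a)) / sqrt (normn n (d1 x) * normn n (d1 a)) >= u1 a x).
    { intros a x Ha Hax Hx. apply (half n phi d1 d2 d3 a x (u1 a) (du1 a) (ddu1 a) (fun _ => PI^2/2)); try assumption.
      - intros t Ht. apply HS; lra.
      - intros t Ht. split. apply u1_d. apply du1_d.
      - intros t Ht. apply ddu1_eq.
      - apply u1_a. - apply du1_a.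
      - intros t Ht. apply u1_pos. lra. }
    destruct (Rtotal_order x1 x2) as [Hl|[He'|Hg]].
    + rewrite subv_sym, Rmult_comm, Rabs_left by lra.
      replace (- (x1 - x2)) with (x2 - x1) by ring. apply G; lra.
    + subst. rewrite normn_self. replace (x2 - x2) with 0 by ring. rewrite Rabs_R0, Rmult_0_r, sin_0.
      unfold Rdiv. lra.
    + rewrite Rabs_right by lra. apply G; lra.
  - intros HS x1 x2 H1 H2.
    assert (G: forall a x, -1 < a -> a < x -> x < 1 ->
      normn n (subv (phi x) (phi a)) / sqrt (normn n (d1 x) * normn n (d1 a)) >= u2 a x).
    { intros a x Ha Hax Hx. apply (half n phi d1 d2 d3 a x (u2 a) (du2 a) (ddu2 a) (fun t => 2 / ((1 - t*t)*(1-t*t)))); try assumption.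
      - intros t Ht. replace ((1 - t*t)*(1-t*t)) with ((1 - t^2)^2) by ring. apply HS; lra.
      - intros t Ht. split. apply u2_d; auto. apply du2_d; auto.
      - intros t Ht. reflexivity.
      - apply u2_a. - apply du2_a; lra.
      - intros t Ht. apply u2_pos; lra. }
    assert (Hd: forall a x, -1 < a -> a < x -> x < 1 -> sqrt ((1 - x ^ 2) * (1 - a ^ 2)) * dhyp x a = u2 a x).
    { intros a x Ha Hax Hx. unfold dhyp, u2. fold (T x). fold (T a).
      rewrite Rabs_right by (pose proof (T_lt a x); lra).
      rewrite sqrt_mult by nra. replace (x^2) with (x*x) by ring. replace (a^2) with (a*a) by ring. ring. }
    destruct (Rtotal_order x1 x2) as [Hl|[He'|Hg]].
    + rewrite subv_sym, (Rmult_comm (normn n (d1 x1))).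
      replace (sqrt ((1 - x1 ^ 2) * (1 - x2 ^ 2)) * dhyp x1 x2) with (sqrt ((1 - x2 ^ 2) * (1 - x1 ^ 2)) * dhyp x2 x1).
      rewrite Hd by lra. apply G; lra.
      unfold dhyp. rewrite (Rmult_comm (1 - x2 ^ 2)), Rabs_minus_sym. reflexivity.
    + subst. rewrite normn_self. unfold dhyp. replace (1 / 2 * ln ((1 + x2) / (1 - x2)) - 1 / 2 * ln ((1 + x2) / (1 - x2))) with 0 by ring.
      rewrite Rabs_R0, Rmult_0_r. unfold Rdiv. lra.
    + rewrite Hd by lra. apply G; lra.
Qed.
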